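(* Let $a>0$ and let $\theta_0,\theta_1,\theta_2\in\mathbb{R}$ be distinct. In the $(t,x)$-plane consider the points $P_i=\left(\theta_i,\tfrac12 a\theta_i^2\right)$, $i=0,1,2$, on the parabola $x=\tfrac12 at^2$. For $c>0$ equip the plane with the Minkowski inner product $u\cdot v=-c^2u_tv_t+u_xv_x$ associated to the metric $ds^2=-c^2dt^2+dx^2$. Then for all sufficiently large $c$ the chords $P_0P_1$ and $P_0P_2$ are timelike, and their pseudo-angle $\theta(c)\ge0$, defined by $\cosh^2(\theta(c))=\frac{(u\cdot v)^2}{(u\cdot u)(v\cdot v)}$ with $u=P_1-P_0$, $v=P_2-P_0$, satisfies $\cosh^2(\theta(c))\to1$ and $$\theta(c)^2\sim\frac{a^2}{4c^2}(\theta_1-\theta_2)^2\quad\text{as } c\to\infty,$$ an asymptotic which does not depend on $\theta_0$.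
   Context: A vector $u$ is timelike if $u\cdot u<0$. This parabola is the $c\to\infty$ limit of the hyperbolae $x=\frac{c^2}{a}(\cosh(a\theta/c)-1)$, $t=\frac{c}{a}\sinh(a\theta/c)$ (worldlines of constant proper acceleration $a$). *)

(* Defs.v *)
From Stdlib Require Import Reals.
From Coquelicot Require Import Coquelicot.
Open Scope R_scope.

Definition pt (a th : R) : R * R := (th, a * th ^ 2 / 2).

Definition vsub (p q : R * R) : R * R := (fst p - fst q, snd p - snd q).

Definition mdot (c : R) (u v : R * R) : R :=
  - c ^ 2 * fst u * fst v + snd u * snd v.

Definition timelike (c : R) (u : R * R) : Prop := mdot c u u < 0.

Definition cosh2_ratio (c : R) (u v : R * R) : R :=
  (mdot c u v) ^ 2 / (mdot c u u * mdot c v v).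

(* Main.v *)
Require Import Defs.
From Stdlib Require Import Reals Lra.
From Coquelicot Require Import Coquelicot.
Open Scope R_scope.

Lemma cosh2_sinh2 y : cosh y ^ 2 = 1 + sinh y ^ 2.
Proof.
  unfold cosh, sinh.
  assert (H : exp y * exp (- y) = 1) by (rewrite <- exp_plus; replace (y + - y) with 0 by ring; apply exp_0).
  field_simplify. nra.
Qed.

Lemma sinh_nonneg y : 0 <= y -> 0 <= sinh y.
Proof.
  intros H. destruct (Req_dec y 0) as [->|Hn]. rewrite sinh_0; lra.
  left. rewrite <- sinh_0. apply sinh_lt. lra.
Qed.

Lemma cosh_ge1 y : 1 <= cosh y.
Proof.
  assert (0 < cosh y) by (unfold cosh; pose proof (exp_pos y); pose proof (exp_pos (-y)); lra).
  pose proof (cosh2_sinh2 y). nra.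
Qed.

Lemma sinh_ge_id y : 0 <= y -> y <= sinh y.
Proof.
  intros H. destruct (Req_dec y 0) as [->|Hn]. rewrite sinh_0; lra.
  destruct (MVT_cor2 (fun x => sinh x - x) (fun x => cosh x - 1) 0 y) as [c [Hc _]].
  lra.
  intros c _. apply (derivable_pt_lim_minus sinh id). apply derivable_pt_lim_sinh. apply derivable_pt_lim_id.
  rewrite sinh_0 in Hc. pose proof (cosh_ge1 c). nra.
Qed.

Lemma sinh_le y : 0 <= y -> sinh y <= y * cosh y.
Proof.
  intros H. destruct (Req_dec y 0) as [->|Hn]. rewrite sinh_0; lra.
  destruct (MVT_cor2 (fun x => x * cosh x - sinh x) (fun x => x * sinh x) 0 y) as [c [Hc Hc2]].
  lra.
  intros c _.
  replace (c * sinh c) with ((1 * cosh c + c * sinh c) - cosh c) by ring.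
  apply (derivable_pt_lim_minus (id * cosh)%F sinh).
  apply (derivable_pt_lim_mult id cosh). apply derivable_pt_lim_id. apply derivable_pt_lim_cosh.
  apply derivable_pt_lim_sinh.
  rewrite sinh_0, cosh_0 in Hc. assert (0 <= sinh c) by (apply sinh_nonneg; lra). assert (0 <= c * sinh c) by (apply Rmult_le_pos; lra). nra.
Qed.

Lemma lim_via (g : R -> R) : ex_derive g 0 -> is_lim (fun c => g (/ c)) p_infty (g 0).
Proof.
  intros Hd.
  assert (H1 : is_lim (fun c => / c) p_infty 0).
  { pose proof (is_lim_inv (fun y => y) p_infty p_infty (is_lim_id p_infty)) as H.
    simpl in H. apply H. discriminate. }
  unfold is_lim in *. eapply filterlim_comp. exact H1.
  apply ex_derive_continuous in Hd. exact Hd.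
Qed.

Lemma big_sq p c : Rabs p + 1 < c -> p ^ 2 < c ^ 2.
Proof. intros H. unfold Rabs in H; destruct (Rcase_abs p); nra. Qed.

Theorem mainTheorem4 (a th0 th1 th2 : R) (ha : 0 < a)
  (h01 : th0 <> th1) (h02 : th0 <> th2) (h12 : th1 <> th2) :
  let u := vsub (pt a th1) (pt a th0) in
  let v := vsub (pt a th2) (pt a th0) in
  (exists C : R, forall c : R, C < c ->
     timelike c u /\ timelike c v /\ 1 <= cosh2_ratio c u v)
  /\ is_lim (fun c => cosh2_ratio c u v) p_infty 1
  /\ (forall theta : R -> R,
        (exists C : R, forall c : R, C < c ->
           0 <= theta c /\ (cosh (theta c)) ^ 2 = cosh2_ratio c u v) ->
        is_lim (fun c => theta c ^ 2 / (a ^ 2 / (4 * c ^ 2) * (th1 - th2) ^ 2))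
          p_infty 1).
Proof.
  intros u v.
  set (p := a * (th1 + th0) / 2).
  set (q := a * (th2 + th0) / 2).
  set (d1 := th1 - th0).
  set (d2 := th2 - th0).
  set (K := (p - q) ^ 2).
  assert (Hd1 : d1 <> 0) by (unfold d1; intro; apply h01; lra).
  assert (Hd2 : d2 <> 0) by (unfold d2; intro; apply h02; lra).
  assert (HK : 0 < K).
  { unfold K, p, q. assert (a * (th1 + th0) / 2 - a * (th2 + th0) / 2 <> 0).
    { intro H. apply h12. assert (a * (th1 - th2) = 0) by lra.
      apply Rmult_integral in H0. lra. }
    apply pow2_gt_0; auto. }
  assert (Huu : forall c, mdot c u u = d1 ^ 2 * (p ^ 2 - c ^ 2)).
  { intro c. unfold u, mdot, vsub, pt, d1, p; simpl. field. }
  assert (Hvv : forall c, mdot c v v = d2 ^ 2 * (q ^ 2 - c ^ 2)).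
  { intro c. unfold v, mdot, vsub, pt, d2, q; simpl. field. }
  assert (Huv : forall c, mdot c u v = d1 * d2 * (p * q - c ^ 2)).
  { intro c. unfold u, v, mdot, vsub, pt, d1, d2, p, q; simpl. field. }
  set (E := fun c => c ^ 2 * K / ((c ^ 2 - p ^ 2) * (c ^ 2 - q ^ 2))).
  set (C0 := Rabs p + Rabs q + 1).
  assert (HC0 : forall c, C0 < c -> p ^ 2 < c ^ 2 /\ q ^ 2 < c ^ 2 /\ 0 < c).
  { intros c Hc. unfold C0 in Hc. pose proof (Rabs_pos p). pose proof (Rabs_pos q).
    split; [apply big_sq; lra|split; [apply big_sq; lra|lra]]. }
  assert (Hrat : forall c, C0 < c -> cosh2_ratio c u v = 1 + E c).
  { intros c Hc. destruct (HC0 c Hc) as [Hp [Hq Hc0]].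
    unfold cosh2_ratio. rewrite Huu, Hvv, Huv. unfold E, K.
    field. repeat split; try lra; auto. }
  assert (HE : forall c, C0 < c -> 0 < E c).
  { intros c Hc. destruct (HC0 c Hc) as [Hp [Hq Hc0]]. unfold E.
    apply Rdiv_lt_0_compat. apply Rmult_lt_0_compat; [nra|lra].
    apply Rmult_lt_0_compat; lra. }
  set (gU := fun w => / ((1 - p ^ 2 * w ^ 2) * (1 - q ^ 2 * w ^ 2))).
  assert (HgU : forall c, C0 < c -> gU (/ c) = E c * c ^ 2 / K).
  { intros c Hc. destruct (HC0 c Hc) as [Hp [Hq Hc0]]. unfold gU, E.
    replace (1 - p ^ 2 * (/ c) ^ 2) with ((c ^ 2 - p ^ 2) / c ^ 2) by (field; lra).
    replace (1 - q ^ 2 * (/ c) ^ 2) with ((c ^ 2 - q ^ 2) / c ^ 2) by (field; lra).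
    field. repeat split; lra. }
  assert (HgU0 : ex_derive gU 0).
  { unfold gU. auto_derive; repeat split; rewrite ?Rmult_0_l, ?Rmult_0_r, ?Ropp_0, ?Rplus_0_r, ?Rmult_1_r, ?Rmult_0_l, ?Rplus_0_r, ?Rinv_1; lra. }
  assert (HgR0 : ex_derive (fun w => 1 + K * w ^ 2 * gU w) 0).
  { unfold gU. auto_derive; repeat split; rewrite ?Rmult_0_l, ?Rmult_0_r, ?Ropp_0, ?Rplus_0_r, ?Rmult_1_r, ?Rmult_0_l, ?Rplus_0_r, ?Rinv_1; lra. }
  assert (HgL0 : ex_derive (fun w => gU w / (1 + K * w ^ 2 * gU w)) 0).
  { unfold gU. auto_derive; repeat split; rewrite ?Rmult_0_l, ?Rmult_0_r, ?Ropp_0, ?Rplus_0_r, ?Rmult_1_r, ?Rmult_0_l, ?Rplus_0_r, ?Rinv_1; lra. }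
  split; [|split].
  - exists C0. intros c Hc. destruct (HC0 c Hc) as [Hp [Hq Hc0]].
    unfold timelike. rewrite Huu, Hvv, Hrat by auto. pose proof (HE c Hc).
    split; [|split].
    + assert (0 < d1 ^ 2) by (apply pow2_gt_0; auto). nra.
    + assert (0 < d2 ^ 2) by (apply pow2_gt_0; auto). nra.
    + lra.
  - replace (Finite 1) with (Finite ((fun w => 1 + K * w ^ 2 * gU w) 0)) by (f_equal; simpl; ring).
    eapply is_lim_ext_loc; [|apply (lim_via (fun w => 1 + K * w ^ 2 * gU w)); exact HgR0].
    exists C0. intros c Hc. destruct (HC0 c Hc) as [Hp [Hq Hc0]].
    rewrite Hrat by auto. rewrite HgU by auto. field. split; lra.
  - intros theta [C1 HC1].
    assert (Hden : forall c, 0 < c -> a ^ 2 / (4 * c ^ 2) * (th1 - th2) ^ 2 = K / c ^ 2).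
    { intros c Hc. unfold K, p, q. field. lra. }
    assert (HgU1 : gU 0 = 1) by (unfold gU; simpl; field).
    apply (is_lim_le_le_loc (fun c => gU (/ c) / (1 + K * (/ c) ^ 2 * gU (/ c))) (fun c => gU (/ c))).
    + exists (Rmax C0 C1). intros c Hc.
      assert (Hc0' : C0 < c) by (eapply Rle_lt_trans; [apply Rmax_l|exact Hc]).
      assert (Hc1' : C1 < c) by (eapply Rle_lt_trans; [apply Rmax_r|exact Hc]).
      destruct (HC0 c Hc0') as [Hp [Hq Hc0]].
      destruct (HC1 c Hc1') as [Ht Hcosh].
      rewrite Hrat in Hcosh by auto.
      pose proof (HE c Hc0') as HEc.
      rewrite Hden by auto. rewrite HgU by auto.
      set (t := theta c) in *. set (e := E c) in *.
      rewrite cosh2_sinh2 in Hcosh.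
      assert (Hs2 : sinh t ^ 2 = e) by lra.
      pose proof (sinh_ge_id t Ht). pose proof (sinh_le t Ht).
      pose proof (cosh_ge1 t).
      assert (Hup : t ^ 2 <= e) by nra.
      assert (Hsc : sinh t ^ 2 <= t ^ 2 * cosh t ^ 2) by nra.
      rewrite cosh2_sinh2, Hs2 in Hsc.
      replace (K * (/ c) ^ 2 * (e * c ^ 2 / K)) with e by (field; split; lra).
      assert (0 < c ^ 2) by nra.
      replace (t ^ 2 / (K / c ^ 2)) with (t ^ 2 * c ^ 2 / K) by (field; split; lra).
      split.
      * replace (e * c ^ 2 / K / (1 + e)) with ((e / (1 + e)) * c ^ 2 / K) by (field; split; lra).
        unfold Rdiv. apply Rmult_le_compat_r. left; apply Rinv_0_lt_compat; lra.
        apply Rmult_le_compat_r. lra.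
        apply (Rmult_le_reg_r (1 + e)). lra.
        replace (e * / (1 + e) * (1 + e)) with e by (field; lra). lra.
      * unfold Rdiv. apply Rmult_le_compat_r. left; apply Rinv_0_lt_compat; lra.
        apply Rmult_le_compat_r; lra.
    + replace (Finite 1) with (Finite ((fun w => gU w / (1 + K * w ^ 2 * gU w)) 0))
        by (f_equal; simpl; rewrite HgU1; field).
      apply (lim_via (fun w => gU w / (1 + K * w ^ 2 * gU w))); exact HgL0.
    + rewrite <- HgU1. apply (lim_via gU HgU0).
Qed.
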